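(* For integers $0\le a<b$ let $p_{a,b}(\lambda)=\lambda^b-\lambda^a-1$. Consider two distinct such trinomials $p_{a_1,b_1}$ and $p_{a_2,b_2}$ with $0\le a_1<a_2$. They have a common root $\lambda\ge 1.05$ if and only if one of the following holds: (a) $(a_1,b_1)=(1,3)$ and $(a_2,b_2)=(4,5)$ (which are mutually prime), in which case the common root is $\lambda=\sigma$, the plastic number; (b) $(a_1,b_1)=(m,3m)$ and $(a_2,b_2)=(4m,5m)$ for some $m\in\{2,3,4,5\}$, in which case the common root is $\lambda=\sigma^{1/m}$.
   Context: The plastic number $\sigma=\frac{\sqrt[3]{9+\sqrt{69}}+\sqrt[3]{9-\sqrt{69}}}{\sqrt[3]{18}}\approx 1.325$ is the unique real root of $x^3-x-1=0$; it also satisfies $\sigma^5-\sigma^4-1=0$. *)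

(* Defs.v *)
From Stdlib Require Import Reals Lra Lia.
Open Scope R_scope.

Definition ptri (a b : nat) (x : R) : R := x ^ b - x ^ a - 1.

Definition cbrt_pos (x : R) : R := Rpower x (1 / 3).

(* The plastic number, by the explicit formula of the paper
   (both 9 + sqrt 69 and 9 - sqrt 69 are positive). *)
Definition plastic : R :=
  (cbrt_pos (9 + sqrt 69) + cbrt_pos (9 - sqrt 69)) / cbrt_pos 18.

Definition common_root (a1 b1 a2 b2 : nat) (l : R) : Prop :=
  ptri a1 b1 l = 0 /\ ptri a2 b2 l = 0.

(* Main.v *)
Require Import Defs.
From Stdlib Require Import Reals Lra Lia ZArith List Bool Psatz.
Open Scope R_scope.

Open Scope Z_scope.
Definition QQ : Z := 2^20.
Definition zp (x : Z) (n : nat) : Z := x ^ Z.of_nat n.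
Definition inS (a d : nat) : bool := (zp 21 a * (zp 21 d - zp 20 d)) <=? zp 20 (a+d).
Definition tlo (a d : nat) (n : Z) : bool := (zp n a * (zp n d - zp QQ d)) <? zp QQ (a+d).
Definition thi (a d : nat) (n : Z) : bool := zp QQ (a+d) <=? (zp n a * (zp n d - zp QQ d)).
Definition certn a d n := (QQ <=? n) && tlo a d n && thi a d (n+1).
Definition checkAg (L : list (nat*nat*Z)) := forallb (fun x => match x with (a,d,n) => certn a d n end) L.
Definition exc (a1 d1 a2 d2 : nat) : bool :=
  existsb (fun m => Nat.eqb a1 m && Nat.eqb d1 (2*m) && Nat.eqb a2 (4*m) && Nat.eqb d2 m) (seq 1 5).
Definition checkBg (L : list (nat*nat*Z)) :=
  forallb (fun x => match x with (a1,d1,n1) => forallb (fun y => match y with (a2,d2,n2) =>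
     implb (Nat.ltb a1 a2 && Z.eqb n1 n2) (exc a1 d1 a2 d2) end) L end) L.
Definition allS := flat_map (fun a => flat_map (fun d => if inS a d then (a,d)::nil else nil) (seq 1 14)) (seq 0 62).
Definition proj (L : list (nat*nat*Z)) := map (fun x => match x with (a,d,_) => (a,d) end) L.
Definition pair_eqb (x y : nat*nat) := match x, y with (a,b),(c,d) => Nat.eqb a c && Nat.eqb b d end.
Fixpoint leqb (l1 l2 : list (nat*nat)) := match l1, l2 with nil,nil => true
  | x::l1, y::l2 => pair_eqb x y && leqb l1 l2 | _,_ => false end.
Definition tbl : list (nat*nat*Z) :=
  (0%nat,1%nat,2097151) :: (0%nat,2%nat,1482910) :: (0%nat,3%nat,1321122) :: (0%nat,4%nat,1246974) :: (0%nat,5%nat,1204497) :: (0%nat,6%nat,1176986) :: (0%nat,7%nat,1157721) :: (0%nat,8%nat,1143480) :: (0%nat,9%nat,1132524) :: (0%nat,10%nat,1123835) :: (0%nat,11%nat,1116776) :: (0%nat,12%nat,1110927) :: (0%nat,13%nat,1106002) :: (0%nat,14%nat,1101798) :: (1%nat,1%nat,1696631) :: (1%nat,2%nat,1389067) :: (1%nat,3%nat,1280042) :: (1%nat,4%nat,1224006) :: (1%nat,5%nat,1189844) :: (1%nat,6%nat,1166829) :: (1%nat,7%nat,1150268) :: (1%nat,8%nat,1137778) :: (1%nat,9%nat,1128022) :: (1%nat,10%nat,1120190) :: (1%nat,11%nat,1113765) :: (1%nat,12%nat,1108397) :: (1%nat,13%nat,1103847) :: (2%nat,1%nat,1536762)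 :: (2%nat,2%nat,1333809) :: (2%nat,3%nat,1251852) :: (2%nat,4%nat,1206873) :: (2%nat,5%nat,1178319) :: (2%nat,6%nat,1158543) :: (2%nat,7%nat,1144022) :: (2%nat,8%nat,1132900) :: (2%nat,9%nat,1124107) :: (2%nat,10%nat,1116979) :: (2%nat,11%nat,1111082) :: (2%nat,12%nat,1106123) :: (2%nat,13%nat,1101894) :: (3%nat,1%nat,1447325) :: (3%nat,2%nat,1296570) :: (3%nat,3%nat,1231012) :: (3%nat,4%nat,1193470) :: (3%nat,5%nat,1168950) :: (3%nat,6%nat,1151616) :: (3%nat,7%nat,1138688) :: (3%nat,8%nat,1128665) :: (3%nat,9%nat,1120662) :: (3%nat,10%nat,1114121) :: (3%nat,11%nat,1108673) :: (3%nat,12%nat,1104064) :: (4%nat,1%nat,1389067) :: (4%nat,2%nat,1269414) :: (4%nat,3%nat,1214829) :: (4%nat,4%nat,1182624) :: (4%nat,5%nat,1161142) :: (4%nat,6%nat,1145714) :: (4%nat,7%nat,1134065) :: (4%nat,8%nat,1124943) :: (4%nat,9%nat,1117599) :: (4%nat,10%nat,1111556) :: (4%nat,11%nat,1106493) :: (4%nat,12%nat,1102188) :: (5%nat,1%nat,1347628) :: (5%nat,2%nat,1248552) :: (5%nat,3%nat,1201813) :: (5%nat,4%nat,1173621) :: (5%nat,5%nat,1154509) :: (5%nat,6%nat,1140609) :: (5%nat,7%nat,1130008) :: (5%nat,8%nat,1121639) :: (5%nat,9%nat,1114854) :: (5%nat,10%nat,1109237) :: (5%nat,11%nat,1104508)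 :: (6%nat,1%nat,1316406) :: (6%nat,2%nat,1231921) :: (6%nat,3%nat,1191065) :: (6%nat,4%nat,1165998) :: (6%nat,5%nat,1148785) :: (6%nat,6%nat,1136138) :: (6%nat,7%nat,1126412) :: (6%nat,8%nat,1118679) :: (6%nat,9%nat,1112374) :: (6%nat,10%nat,1107128) :: (6%nat,11%nat,1102691) :: (7%nat,1%nat,1291902) :: (7%nat,2%nat,1218290) :: (7%nat,3%nat,1182004) :: (7%nat,4%nat,1159440) :: (7%nat,5%nat,1143782) :: (7%nat,6%nat,1132180) :: (7%nat,7%nat,1123195) :: (7%nat,8%nat,1116009) :: (7%nat,9%nat,1110120) :: (7%nat,10%nat,1105198) :: (7%nat,11%nat,1101020) :: (8%nat,1%nat,1272079) :: (8%nat,2%nat,1206873) :: (8%nat,3%nat,1174240) :: (8%nat,4%nat,1153723) :: (8%nat,5%nat,1139362) :: (8%nat,6%nat,1128645) :: (8%nat,7%nat,1120296) :: (8%nat,8%nat,1113584) :: (8%nat,9%nat,1108059) :: (8%nat,10%nat,1103424) :: (9%nat,1%nat,1255660) :: (9%nat,2%nat,1197144) :: (9%nat,3%nat,1167495) :: (9%nat,4%nat,1148685) :: (9%nat,5%nat,1135422) :: (9%nat,6%nat,1125464) :: (9%nat,7%nat,1117666) :: (9%nat,8%nat,1111370) :: (9%nat,9%nat,1106167) :: (9%nat,10%nat,1101786) :: (10%nat,1%nat,1241803) :: (10%nat,2%nat,1188735) :: (10%nat,3%nat,1161571) :: (10%nat,4%nat,1144203) :: (10%nat,5%nat,1131882)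 :: (10%nat,6%nat,1122583) :: (10%nat,7%nat,1115267) :: (10%nat,8%nat,1109338) :: (10%nat,9%nat,1104420) :: (11%nat,1%nat,1229928) :: (11%nat,2%nat,1181380) :: (11%nat,3%nat,1156315) :: (11%nat,4%nat,1140185) :: (11%nat,5%nat,1128680) :: (11%nat,6%nat,1119957) :: (11%nat,7%nat,1113068) :: (11%nat,8%nat,1107464) :: (11%nat,9%nat,1102802) :: (12%nat,1%nat,1219619) :: (12%nat,2%nat,1174883) :: (12%nat,3%nat,1151616) :: (12%nat,4%nat,1136557) :: (12%nat,5%nat,1125766) :: (12%nat,6%nat,1117551) :: (12%nat,7%nat,1111041) :: (12%nat,8%nat,1105729) :: (12%nat,9%nat,1101298) :: (13%nat,1%nat,1210574) :: (13%nat,2%nat,1169094) :: (13%nat,3%nat,1147382) :: (13%nat,4%nat,1133262) :: (13%nat,5%nat,1123100) :: (13%nat,6%nat,1115338) :: (13%nat,7%nat,1109167) :: (13%nat,8%nat,1104117) :: (14%nat,1%nat,1202563) :: (14%nat,2%nat,1163897) :: (14%nat,3%nat,1143545) :: (14%nat,4%nat,1130252) :: (14%nat,5%nat,1120651) :: (14%nat,6%nat,1113293) :: (14%nat,7%nat,1107427) :: (14%nat,8%nat,1102615) :: (15%nat,1%nat,1195412) :: (15%nat,2%nat,1159201) :: (15%nat,3%nat,1140048) :: (15%nat,4%nat,1127489) :: (15%nat,5%nat,1118389) :: (15%nat,6%nat,1111396) :: (15%nat,7%nat,1105806) :: (15%nat,8%nat,1101210) :: (16%nat,1%nat,1188982)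 :: (16%nat,2%nat,1154933) :: (16%nat,3%nat,1136845) :: (16%nat,4%nat,1124943) :: (16%nat,5%nat,1116294) :: (16%nat,6%nat,1109630) :: (16%nat,7%nat,1104292) :: (17%nat,1%nat,1183166) :: (17%nat,2%nat,1151034) :: (17%nat,3%nat,1133897) :: (17%nat,4%nat,1122587) :: (17%nat,5%nat,1114346) :: (17%nat,6%nat,1107982) :: (17%nat,7%nat,1102873) :: (18%nat,1%nat,1177876) :: (18%nat,2%nat,1147456) :: (18%nat,3%nat,1131175) :: (18%nat,4%nat,1120400) :: (18%nat,5%nat,1112530) :: (18%nat,6%nat,1106439) :: (18%nat,7%nat,1101540) :: (19%nat,1%nat,1173041) :: (19%nat,2%nat,1144158) :: (19%nat,3%nat,1128651) :: (19%nat,4%nat,1118362) :: (19%nat,5%nat,1110831) :: (19%nat,6%nat,1104991) :: (20%nat,1%nat,1168601) :: (20%nat,2%nat,1141107) :: (20%nat,3%nat,1126303) :: (20%nat,4%nat,1116458) :: (20%nat,5%nat,1109237) :: (20%nat,6%nat,1103628) :: (21%nat,1%nat,1164508) :: (21%nat,2%nat,1138275) :: (21%nat,3%nat,1124112) :: (21%nat,4%nat,1114674) :: (21%nat,5%nat,1107739) :: (21%nat,6%nat,1102343) :: (22%nat,1%nat,1160721) :: (22%nat,2%nat,1135637) :: (22%nat,3%nat,1122063) :: (22%nat,4%nat,1112999) :: (22%nat,5%nat,1106327) :: (22%nat,6%nat,1101128) :: (23%nat,1%nat,1157206) :: (23%nat,2%nat,1133174) :: (23%nat,3%nat,1120141)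 :: (23%nat,4%nat,1111422) :: (23%nat,5%nat,1104995) :: (24%nat,1%nat,1153933) :: (24%nat,2%nat,1130868) :: (24%nat,3%nat,1118333) :: (24%nat,4%nat,1109934) :: (24%nat,5%nat,1103734) :: (25%nat,1%nat,1150876) :: (25%nat,2%nat,1128703) :: (25%nat,3%nat,1116630) :: (25%nat,4%nat,1108528) :: (25%nat,5%nat,1102539) :: (26%nat,1%nat,1148015) :: (26%nat,2%nat,1126667) :: (26%nat,3%nat,1115022) :: (26%nat,4%nat,1107196) :: (26%nat,5%nat,1101404) :: (27%nat,1%nat,1145330) :: (27%nat,2%nat,1124747) :: (27%nat,3%nat,1113501) :: (27%nat,4%nat,1105933) :: (28%nat,1%nat,1142804) :: (28%nat,2%nat,1122933) :: (28%nat,3%nat,1112059) :: (28%nat,4%nat,1104733) :: (29%nat,1%nat,1140424) :: (29%nat,2%nat,1121216) :: (29%nat,3%nat,1110691) :: (29%nat,4%nat,1103590) :: (30%nat,1%nat,1138176) :: (30%nat,2%nat,1119589) :: (30%nat,3%nat,1109390) :: (30%nat,4%nat,1102502) :: (31%nat,1%nat,1136049) :: (31%nat,2%nat,1118044) :: (31%nat,3%nat,1108151) :: (31%nat,4%nat,1101463) :: (32%nat,1%nat,1134034) :: (32%nat,2%nat,1116574) :: (32%nat,3%nat,1106969) :: (33%nat,1%nat,1132121) :: (33%nat,2%nat,1115175) :: (33%nat,3%nat,1105842) :: (34%nat,1%nat,1130303) :: (34%nat,2%nat,1113840) :: (34%nat,3%nat,1104764) :: (35%nat,1%nat,1128572)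 :: (35%nat,2%nat,1112565) :: (35%nat,3%nat,1103732) :: (36%nat,1%nat,1126922) :: (36%nat,2%nat,1111347) :: (36%nat,3%nat,1102744) :: (37%nat,1%nat,1125347) :: (37%nat,2%nat,1110181) :: (37%nat,3%nat,1101796) :: (38%nat,1%nat,1123841) :: (38%nat,2%nat,1109063) :: (39%nat,1%nat,1122401) :: (39%nat,2%nat,1107992) :: (40%nat,1%nat,1121022) :: (40%nat,2%nat,1106963) :: (41%nat,1%nat,1119700) :: (41%nat,2%nat,1105974) :: (42%nat,1%nat,1118431) :: (42%nat,2%nat,1105022) :: (43%nat,1%nat,1117212) :: (43%nat,2%nat,1104107) :: (44%nat,1%nat,1116040) :: (44%nat,2%nat,1103224) :: (45%nat,1%nat,1114912) :: (45%nat,2%nat,1102373) :: (46%nat,1%nat,1113826) :: (46%nat,2%nat,1101552) :: (47%nat,1%nat,1112779) :: (48%nat,1%nat,1111770) :: (49%nat,1%nat,1110795) :: (50%nat,1%nat,1109853) :: (51%nat,1%nat,1108943) :: (52%nat,1%nat,1108063) :: (53%nat,1%nat,1107211) :: (54%nat,1%nat,1106387) :: (55%nat,1%nat,1105587) :: (56%nat,1%nat,1104813) :: (57%nat,1%nat,1104061) :: (58%nat,1%nat,1103332) :: (59%nat,1%nat,1102623) :: (60%nat,1%nat,1101935) :: (61%nat,1%nat,1101267) :: nil.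

Lemma checkA_ok : checkAg tbl = true. Proof. vm_compute. reflexivity. Qed.
Lemma checkB_ok : checkBg tbl = true. Proof. vm_compute. reflexivity. Qed.
Lemma checkS_ok : leqb allS (proj tbl) = true. Proof. vm_compute. reflexivity. Qed.

Lemma leqb_eq l1 l2 : leqb l1 l2 = true -> l1 = l2.
Proof.
  revert l2; induction l1 as [|[x1 x2] l1 IH]; intros [|[y1 y2] l2]; simpl; try discriminate; auto.
  intros H. apply andb_prop in H as [H1 H2]. apply andb_prop in H1 as [E1 E2].
  apply Nat.eqb_eq in E1, E2. subst. f_equal. apply IH; auto.
Qed.

Lemma in_proj (L : list (nat*nat*Z)) a d : In (a,d) (proj L) -> exists n, In (a,d,n) L.
Proof.
  unfold proj. intros H. apply in_map_iff in H as [[[a' d'] n] [E H]].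
  injection E as -> ->. exists n; auto.
Qed.

Close Scope Z_scope.
Open Scope R_scope.

Definition g (a d : nat) (x : R) : R := x^a * (x^d - 1).

Lemma pow_lt_strict x y n : 0 <= x < y -> (0 < n)%nat -> x^n < y^n.
Proof.
  intros [Hx Hxy] Hn. induction n as [|n IH]; [lia|].
  destruct n as [|n]. simpl; lra.
  assert (H: x^(S n) < y^(S n)) by (apply IH; lia).
  change (x * x^(S n) < y * y^(S n)).
  assert (0 <= x^(S n)) by (apply pow_le; lra).
  nra.
Qed.

Lemma g_mono a d x y : 1 <= x -> x <= y -> g a d x <= g a d y.
Proof.
  intros Hx Hxy; unfold g.
  assert (1 <= x^d) by (apply pow_R1_Rle; lra).
  assert (x^d <= y^d) by (apply pow_incr; lra).
  assert (x^a <= y^a) by (apply pow_incr; lra).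
  assert (0 <= x^a) by (apply pow_le; lra).
  apply Rmult_le_compat; lra.
Qed.

Lemma g_smono a d x y : (0<d)%nat -> 1 <= x -> x < y -> g a d x < g a d y.
Proof.
  intros Hd Hx Hxy; unfold g.
  assert (1 <= x^d) by (apply pow_R1_Rle; lra).
  assert (x^d < y^d) by (apply pow_lt_strict; [lra|lia]).
  assert (x^a <= y^a) by (apply pow_incr; lra).
  assert (1 <= x^a) by (apply pow_R1_Rle; lra).
  nra.
Qed.

Lemma powdiv p q n : q <> 0 -> (p/q)^n = p^n / q^n.
Proof. intros; unfold Rdiv; rewrite Rpow_mult_distr, pow_inv; reflexivity. Qed.

Lemma gZ a d p q : (0 < q)%Z ->
  g a d (IZR p / IZR q) = IZR (zp p a * (zp p d - zp q d)) / IZR (zp q (a+d)).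
Proof.
  intros Hq. assert (IZR q <> 0) by (apply not_0_IZR; lia).
  unfold g, zp. rewrite mult_IZR, minus_IZR, <- !pow_IZR, !powdiv by auto.
  rewrite pow_add. field. split; apply pow_nonzero; auto.
Qed.

Lemma zp_pos q n : (0 < q)%Z -> (0 < zp q n)%Z.
Proof. intros; unfold zp; apply Z.pow_pos_nonneg; lia. Qed.

Lemma lt1_of A B : (0 < B)%Z -> (A < B)%Z -> IZR A / IZR B < 1.
Proof. intros HB H. assert (0 < IZR B) by (apply IZR_lt; lia).
  apply Rmult_lt_reg_r with (IZR B); [lra|].
  replace (IZR A / IZR B * IZR B) with (IZR A) by (field; lra).
  rewrite Rmult_1_l. apply IZR_lt; lia. Qed.

Lemma ge1_of A B : (0 < B)%Z -> (B <= A)%Z -> 1 <= IZR A / IZR B.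
Proof. intros HB H. assert (0 < IZR B) by (apply IZR_lt; lia).
  apply Rmult_le_reg_r with (IZR B); [lra|].
  replace (IZR A / IZR B * IZR B) with (IZR A) by (field; lra).
  rewrite Rmult_1_l. apply IZR_le; lia. Qed.

Lemma le1_to A B : (0 < B)%Z -> IZR A / IZR B <= 1 -> (A <= B)%Z.
Proof. intros HB H. assert (0 < IZR B) by (apply IZR_lt; lia).
  apply le_IZR.
  apply Rmult_le_compat_r with (r := IZR B) in H; [|lra].
  replace (IZR A / IZR B * IZR B) with (IZR A) in H by (field; lra). lra. Qed.

Lemma in_tbl a d : (a < 62)%nat -> (1 <= d < 15)%nat -> inS a d = true ->
  exists n, In (a,d,n) tbl.
Proof. intros H1 H2 H3. apply in_proj. rewrite <- (leqb_eq _ _ checkS_ok).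
  unfold allS. apply in_flat_map. exists a. split.
  apply in_seq; lia.
  apply in_flat_map. exists d. split. apply in_seq; lia. rewrite H3. left; reflexivity. Qed.

Lemma root_bounds a b l : (a < b)%nat -> 21/20 <= l -> ptri a b l = 0 ->
  g a (b-a) l = 1 /\ (a < 62)%nat /\ (1 <= b - a < 15)%nat /\ inS a (b-a) = true.
Proof.
  intros Hab Hl Hp.
  set (d := (b - a)%nat).
  assert (Hb : b = (a + d)%nat) by (unfold d; lia).
  assert (Hg : g a d l = 1).
  { assert (g a d l = ptri a b l + 1) by (unfold g, ptri; rewrite Hb, pow_add; ring). lra. }
  assert (Hd1 : (1 <= d)%nat) by (unfold d; lia).
  assert (Hla : 1 <= l^a) by (apply pow_R1_Rle; lra).
  assert (Hld : l <= l^d) by (rewrite <- (pow_1 l) at 1; apply Rle_pow; lra || lia).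
  assert (Hd : (d < 15)%nat).
  { destruct (Nat.lt_ge_cases d 15) as [h|h]; auto. exfalso.
    assert (l^15 <= l^d) by (apply Rle_pow; lra || lia).
    assert ((21/20)^15 <= l^15) by (apply pow_incr; lra).
    assert ((21/20)^15 - 1 > 1) by (simpl; lra).
    unfold g in Hg. nra. }
  assert (Ha : (a < 62)%nat).
  { destruct (Nat.lt_ge_cases a 62) as [h|h]; auto. exfalso.
    assert (l^62 <= l^a) by (apply Rle_pow; lra || lia).
    assert ((21/20)^62 <= l^62) by (apply pow_incr; lra).
    assert ((21/20)^62 * (21/20 - 1) > 1) by (simpl; lra).
    unfold g in Hg. nra. }
  assert (HS : inS a d = true).
  { assert (g a d (21/20) <= 1) by (rewrite <- Hg; apply g_mono; lra).
    rewrite gZ in H by lia. apply le1_to in H; [|apply zp_pos; lia].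
    unfold inS. apply Z.leb_le. exact H. }
  split; [exact Hg|]. split; [exact Ha|]. split; [lia|exact HS].
Qed.

Lemma QQ_pos : (0 < QQ)%Z.
Proof. unfold QQ. lia. Qed.

Lemma genA (L : list (nat*nat*Z)) a d n : checkAg L = true -> In (a,d,n) L -> certn a d n = true.
Proof. intros HA Hin. unfold checkAg in HA. rewrite forallb_forall in HA. exact (HA _ Hin). Qed.

Lemma genB (L : list (nat*nat*Z)) a1 d1 n1 a2 d2 n2 : checkBg L = true ->
  In (a1,d1,n1) L -> In (a2,d2,n2) L -> (a1 < a2)%nat -> n1 = n2 ->
  exists m, (1 <= m < 6)%nat /\ a1 = m /\ d1 = (2*m)%nat /\ a2 = (4*m)%nat /\ d2 = m.
Proof.
  intros HB I1 I2 Ha Hn. unfold checkBg in HB.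
  rewrite forallb_forall in HB. specialize (HB _ I1). cbv beta iota in HB.
  rewrite forallb_forall in HB. specialize (HB _ I2). cbv beta iota in HB.
  assert (Nat.ltb a1 a2 = true) by (apply Nat.ltb_lt; lia).
  assert (Z.eqb n1 n2 = true) by (apply Z.eqb_eq; auto).
  rewrite H, H0 in HB. simpl in HB. unfold exc in HB.
  apply existsb_exists in HB as [m [Hm He]].
  apply in_seq in Hm.
  repeat (apply andb_prop in He as [He ?]).
  repeat match goal with H : Nat.eqb _ _ = true |- _ => apply Nat.eqb_eq in H end.
  exists m. lia.
Qed.

Lemma cell_facts a d n : In (a,d,n) tbl ->
  (QQ <= n)%Z /\ g a d (IZR n / IZR QQ) < 1 /\ 1 <= g a d (IZR (n + 1) / IZR QQ).
Proof.
  intros Hin.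
  pose proof (genA tbl a d n checkA_ok Hin) as HA.
  unfold certn in HA. apply andb_prop in HA as [HA Hhi]. apply andb_prop in HA as [Hq Hlo].
  apply Z.leb_le in Hq. unfold tlo in Hlo. apply Z.ltb_lt in Hlo.
  unfold thi in Hhi. apply Z.leb_le in Hhi.
  pose proof QQ_pos as HQ.
  split; [exact Hq|]. split.
  - rewrite gZ by exact HQ. apply lt1_of; [apply zp_pos; exact HQ| exact Hlo].
  - rewrite gZ by exact HQ. apply ge1_of; [apply zp_pos; exact HQ| exact Hhi].
Qed.

Lemma root_cell a b l : (a < b)%nat -> 21/20 <= l -> ptri a b l = 0 ->
  exists n : Z, In (a, (b-a)%nat, n) tbl /\
  IZR n / IZR QQ < l <= IZR (n + 1) / IZR QQ.
Proof.
  intros Hab Hl Hp.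
  destruct (root_bounds a b l Hab Hl Hp) as [Hg [Ha [Hd HS]]].
  destruct (in_tbl a (b-a) Ha Hd HS) as [n Hin].
  exists n. split; [exact Hin|].
  destruct (cell_facts _ _ _ Hin) as [Hq [G1 G2]].
  pose proof QQ_pos as HQ.
  assert (Q1 : 1 <= IZR n / IZR QQ) by (apply ge1_of; [exact HQ|exact Hq]).
  assert (Q2 : 1 <= IZR (n + 1) / IZR QQ) by (apply ge1_of; [exact HQ|lia]).
  split.
  - destruct (Rlt_or_le (IZR n / IZR QQ) l) as [h|h]; auto.
    exfalso. pose proof (g_mono a (b-a) l _ ltac:(lra) h). lra.
  - destruct (Rle_or_lt l (IZR (n + 1) / IZR QQ)) as [h|h]; auto.
    exfalso. pose proof (g_smono a (b-a) _ l ltac:(lia) Q2 h). lra.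
Qed.

Lemma same_cell n1 n2 l : IZR n1 / IZR QQ < l <= IZR (n1 + 1) / IZR QQ ->
  IZR n2 / IZR QQ < l <= IZR (n2 + 1) / IZR QQ -> n1 = n2.
Proof.
  intros [A1 B1] [A2 B2].
  assert (HQ : 0 < IZR QQ) by (apply IZR_lt; exact QQ_pos).
  assert (forall x y, IZR x / IZR QQ < IZR y / IZR QQ -> (x < y)%Z).
  { intros x y H. apply lt_IZR. unfold Rdiv in H. apply Rmult_lt_reg_r in H; auto.
    apply Rinv_0_lt_compat; auto. }
  assert (n1 < n2 + 1)%Z by (apply H; lra).
  assert (n2 < n1 + 1)%Z by (apply H; lra).
  lia.
Qed.

Lemma cbrt_pos_pos x : 0 < cbrt_pos x.
Proof. unfold cbrt_pos, Rpower. apply exp_pos. Qed.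

Lemma cbrt_cube x : 0 < x -> (cbrt_pos x)^3 = x.
Proof. intros. unfold cbrt_pos. rewrite <- Rpower_pow by (unfold Rpower; apply exp_pos).
  rewrite Rpower_mult. replace (1/3 * INR 3) with 1 by (simpl; field). apply Rpower_1; auto. Qed.

Lemma cbrt_mul x y : 0 < x -> 0 < y -> cbrt_pos x * cbrt_pos y = cbrt_pos (x*y).
Proof. intros. unfold cbrt_pos. apply Rpower_mult_distr; auto. Qed.

Lemma cbrt_of_cube x : 0 < x -> cbrt_pos (x^3) = x.
Proof. intros. unfold cbrt_pos. rewrite <- Rpower_pow by auto. rewrite Rpower_mult.
  replace (INR 3 * (1/3)) with 1 by (simpl; field). apply Rpower_1; auto. Qed.

Lemma plastic_cubic : plastic^3 - plastic - 1 = 0 /\ 0 < plastic.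
Proof.
  assert (Hs : 0 <= sqrt 69) by apply sqrt_pos.
  assert (Hs2 : sqrt 69 * sqrt 69 = 69) by (apply sqrt_sqrt; lra).
  assert (Hs9 : sqrt 69 < 9) by nra.
  assert (HA : 0 < 9 + sqrt 69) by lra.
  assert (HB : 0 < 9 - sqrt 69) by lra.
  unfold plastic.
  set (u := cbrt_pos (9 + sqrt 69)). set (v := cbrt_pos (9 - sqrt 69)). set (w := cbrt_pos 18).
  assert (Hu : u^3 = 9 + sqrt 69) by (apply cbrt_cube; auto).
  assert (Hv : v^3 = 9 - sqrt 69) by (apply cbrt_cube; auto).
  assert (Hw : w^3 = 18) by (apply cbrt_cube; lra).
  assert (Hu0 : 0 < u) by apply cbrt_pos_pos.
  assert (Hv0 : 0 < v) by apply cbrt_pos_pos.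
  assert (Hw0 : 0 < w) by apply cbrt_pos_pos.
  assert (Huvw : u * v * w = 6).
  { unfold u, v, w. rewrite cbrt_mul, cbrt_mul by nra.
    replace ((9 + sqrt 69) * (9 - sqrt 69) * 18) with (6^3) by nra.
    apply cbrt_of_cube; lra. }
  assert (Huv : 3 * u * v = w^2).
  { apply Rmult_eq_reg_r with w; [|lra].
    replace (3*u*v*w) with (3*(u*v*w)) by ring. rewrite Huvw.
    replace (w^2*w) with (w^3) by ring. lra. }
  assert (E : (u+v)^3 = w^3 + w^2*(u+v)).
  { transitivity (u^3+v^3+3*u*v*(u+v)); [ring|]. rewrite Hu, Hv, Huv, Hw. lra. }
  split.
  - rewrite powdiv, E by lra. field. lra.
  - apply Rdiv_lt_0_compat; lra.
Qed.

Lemma cubic_gt x : 0 < x -> x^3 - x - 1 = 0 -> 13/10 < x.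
Proof. intros. simpl in H0. nra. Qed.

Lemma cubic_unique x y : 0 < x -> 0 < y -> x^3 - x - 1 = 0 -> y^3 - y - 1 = 0 -> x = y.
Proof.
  intros Hx Hy H1 H2.
  assert (13/10 < x) by (apply cubic_gt; auto).
  assert (13/10 < y) by (apply cubic_gt; auto).
  assert (E : (x-y)*(x^2+x*y+y^2-1) = 0) by
    (replace ((x-y)*(x^2+x*y+y^2-1)) with ((x^3-x-1)-(y^3-y-1)) by ring; lra).
  apply Rmult_integral in E as [E|E]; [lra|]. nra.
Qed.

Lemma plastic_gt : 13/10 < plastic.
Proof. destruct plastic_cubic. apply cubic_gt; auto. Qed.

Lemma quintic x : x^3 - x - 1 = 0 -> x^5 - x^4 - 1 = 0.
Proof. intros H.
  replace (x^5 - x^4 - 1) with ((x^3-x-1)*(x^2-x+1)) by ring. rewrite H; ring. Qed.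

Lemma rt_props m : (1 <= m)%nat ->
  let l := Rpower plastic (1 / INR m) in 0 < l /\ l^m = plastic.
Proof.
  intros Hm l. assert (0 < l) by (unfold l, Rpower; apply exp_pos). split; auto.
  unfold l. rewrite <- Rpower_pow by auto. rewrite Rpower_mult.
  replace (1 / INR m * INR m) with 1. apply Rpower_1. destruct plastic_cubic; auto.
  field. apply not_0_INR. lia.
Qed.

Theorem lemma1 (a1 b1 a2 b2 : nat)
  (h1 : (a1 < b1)%nat) (h2 : (a2 < b2)%nat) (h12 : (a1 < a2)%nat) :
  ((exists l : R, 105 / 100 <= l /\ common_root a1 b1 a2 b2 l) <->
   ((a1 = 1 /\ b1 = 3 /\ a2 = 4 /\ b2 = 5)%nat \/
    exists m : nat, (2 <= m <= 5)%nat /\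
      (a1 = m /\ b1 = 3 * m /\ a2 = 4 * m /\ b2 = 5 * m)%nat)) /\
  (forall l : R, 105 / 100 <= l -> common_root a1 b1 a2 b2 l ->
     ((a1 = 1 /\ b1 = 3 /\ a2 = 4 /\ b2 = 5)%nat -> l = plastic) /\
     (forall m : nat, (2 <= m <= 5)%nat ->
        (a1 = m /\ b1 = 3 * m /\ a2 = 4 * m /\ b2 = 5 * m)%nat ->
        l = Rpower plastic (1 / INR m))).

Proof.
  split; [split|].
  - intros [l [Hl0 [H1 H2]]].
    assert (Hl : 21/20 <= l) by lra.
    destruct (root_cell a1 b1 l h1 Hl H1) as [n1 [I1 C1]].
    destruct (root_cell a2 b2 l h2 Hl H2) as [n2 [I2 C2]].
    pose proof (same_cell _ _ l C1 C2) as Hn.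
    destruct (genB tbl _ _ _ _ _ _ checkB_ok I1 I2 h12 Hn) as [m [Hm He]].
    destruct (Nat.eq_dec m 1) as [->|Hm1].
    + left. lia.
    + right. exists m. lia.
  - intros [[-> [-> [-> ->]]] | [m [Hm [-> [-> [-> ->]]]]]].
    + exists plastic. destruct plastic_cubic as [Hc Hp]. pose proof plastic_gt.
      split; [lra|]. unfold common_root, ptri. rewrite pow_1. split; [lra|].
      apply quintic; auto.
    + destruct (rt_props m ltac:(lia)) as [Hl Hlm].
      set (l := Rpower plastic (1 / INR m)) in *.
      exists l. destruct plastic_cubic as [Hc Hp]. pose proof plastic_gt.
      split.
      * destruct (Rlt_or_le l (105/100)) as [h|h]; [exfalso|lra].
        assert (l^m <= (21/20)^m) by (apply pow_incr; lra).
        assert ((21/20)^m <= (21/20)^5) by (apply Rle_pow; lra || lia).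
        assert ((21/20)^5 < 13/10) by (simpl; lra). lra.
      * unfold common_root, ptri.
        rewrite (Nat.mul_comm 3 m), (Nat.mul_comm 4 m), (Nat.mul_comm 5 m), !pow_mult, Hlm.
        split; [lra|]. apply quintic; auto.
  - intros l Hl [H1 H2]. split.
    + intros [-> [-> [-> ->]]]. unfold ptri in H1. rewrite pow_1 in H1.
      destruct plastic_cubic as [Hc Hp].
      apply cubic_unique; auto; lra.
    + intros m Hm [-> [-> [-> ->]]].
      unfold ptri in H1. rewrite (Nat.mul_comm 3 m), pow_mult in H1.
      destruct plastic_cubic as [Hc Hp].
      assert (Hl0 : 0 < l) by lra.
      assert (E : l^m = plastic) by (apply cubic_unique; auto; apply pow_lt; lra).
      rewrite <- E. rewrite <- Rpower_pow by auto. rewrite Rpower_mult.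
      replace (INR m * (1 / INR m)) with 1. rewrite Rpower_1; auto.
      field. apply not_0_INR. lia.
Qed.
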